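(* The following is a deductive theorem of impredicative second-order logic, for one-place predicates $P_1,P_2$ and two-place relations $\varepsilon_1,\varepsilon_2$: $$\big(\mathsf{LT}(P_1,\varepsilon_1)\wedge \Sigma x\,P_1(x)\wedge\mathsf{LT}(P_2,\varepsilon_2)\wedge\Sigma x\,P_2(x)\big)\to\exists R\Big(\forall v\forall y(R(v,y)\to(P_1(v)\wedge P_2(y)))\wedge\forall v(P_1(v)\to\exists! y\,R(v,y))\wedge\forall y(P_2(y)\to\exists! v\,R(v,y))\wedge\forall v\forall y\forall x\forall z((R(v,y)\wedge R(x,z))\to(v\,\varepsilon_1\,x\leftrightarrow y\,\varepsilon_2\,z))\Big).$$
   Context: For a predicate $P$ and relation $\varepsilon$, define $a\subseteq_\varepsilon b$ as $\forall x(x\,\varepsilon\,a\to x\,\varepsilon\,b)$; $b=\mathrm{pot}_\varepsilon(a)$ as $\forall x(x\,\varepsilon\,b\leftrightarrow\exists c(x\subseteq_\varepsilon c\wedge c\,\varepsilon\,a))$; $h$ is an $\varepsilon$-history iff for every $x$ with $x\,\varepsilon\,h$, $x=\mathrm{pot}_\varepsilon(x\cap_\varepsilon h)$ (where $x\cap_\varepsilon h$ is the $\varepsilon$-set of things $\varepsilon$-in both); $s$ is an $\varepsilon$-level iff $s=\mathrm{pot}_\varepsilon(h)$ for some $\varepsilon$-history $h$. Then $\mathsf{LT}(P,\varepsilon)$ is the conjunction of: (i) $\forall a\forall b((P(a)\wedge P(b)\wedge\forall x(x\,\varepsilon\,a\leftrightarrow x\,\varepsilon\,b))\to a=b)$;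 (ii) $\forall F\forall a(P(a)\to\exists b(P(b)\wedge\forall x(x\,\varepsilon\,b\leftrightarrow(F(x)\wedge x\,\varepsilon\,a))))$; (iii) $\forall a(P(a)\to\exists s(s\text{ is an }\varepsilon\text{-level}\wedge a\subseteq_\varepsilon s))$; (iv) $\forall x\forall y(x\,\varepsilon\,y\to(P(x)\wedge P(y)))$. For a formula $\Phi$, $\Sigma x\,\Phi(x)$ abbreviates $\exists P(\forall x\,\Phi(P(x))\wedge\forall y(\Phi(y)\to\exists!x\,P(x)=y))$, where $P$ is a second-order function variable (a bijection between the universe and the $\Phi$s). *)

(* Defs.v *)
(* Second-order logic is rendered with a
   universe of individuals U : Type; one-place predicates are U -> Prop,
   two-place relations are U -> U -> Prop, second-order function variables
   are U -> U. *)

Section LevelTheory.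
Variable U : Type.

Definition subeq (eps : U -> U -> Prop) (a b : U) : Prop :=
  forall x, eps x a -> eps x b.

Definition is_pot (eps : U -> U -> Prop) (b a : U) : Prop :=
  forall x, eps x b <-> exists c, subeq eps x c /\ eps c a.

(* x = pot_ε(x ∩_ε h), with "c ε (x ∩_ε h)" read as "c ε x /\ c ε h" *)
Definition is_pot_cap (eps : U -> U -> Prop) (x h : U) : Prop :=
  forall z, eps z x <-> exists c, subeq eps z c /\ (eps c x /\ eps c h).

Definition history (eps : U -> U -> Prop) (h : U) : Prop :=
  forall x, eps x h -> is_pot_cap eps x h.

Definition level (eps : U -> U -> Prop) (s : U) : Prop :=
  exists h, history eps h /\ is_pot eps s h.

Definition LT (P : U -> Prop) (eps : U -> U -> Prop) : Prop :=
  (forall a b, P a -> P b -> (forall x, eps x a <-> eps x b) -> a = b) /\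
  (forall (F : U -> Prop) a, P a ->
      exists b, P b /\ (forall x, eps x b <-> (F x /\ eps x a))) /\
  (forall a, P a -> exists s, level eps s /\ subeq eps a s) /\
  (forall x y, eps x y -> P x /\ P y).

Definition Sigma (Phi : U -> Prop) : Prop :=
  exists f : U -> U,
    (forall x, Phi (f x)) /\ (forall y, Phi y -> exists! x, f x = y).

End LevelTheory.

Arguments subeq {U}. Arguments is_pot {U}. Arguments is_pot_cap {U}.
Arguments history {U}. Arguments level {U}. Arguments LT {U}. Arguments Sigma {U}.

(* Main.v *)
Require Import Defs.
From Stdlib Require Import Classical.

Definition Ext {U} (e : U -> U -> Prop) := forall a b, (forall x, e x a <-> e x b) -> a = b.
Definition Sep {U} (e : U -> U -> Prop) := forall (F : U -> Prop) a, exists b, forall x, e x b <-> F x /\ e x a.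
Definition Strat {U} (e : U -> U -> Prop) := forall a, exists s, level e s /\ subeq e a s.

Lemma all_P U (P : U -> Prop) e : LT P e -> Sigma P -> forall x, P x.
Proof.
  intros [Hext [Hsep [Hstr Hiv]]] [f [Hf Hu]] z.
  destruct (classic (P z)) as [|Hz]; auto. exfalso.
  assert (Hno : forall x y, ~ e x y).
  { intros x y Hxy. destruct (Hiv _ _ Hxy) as [Px Py].
    destruct (Hstr y Py) as [s [[h [Hh Hs]] Hys]].
    apply Hys in Hxy. apply Hs in Hxy. destruct Hxy as [c [Hxc Hch]].
    assert (Hzs : e z s).
    { apply Hs. exists c. split; [|exact Hch].
      intros w Hw. exfalso. apply Hz. exact (proj2 (Hiv _ _ Hw)). }
    apply Hz. exact (proj1 (Hiv _ _ Hzs)). }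
  assert (Heq : forall a b, P a -> P b -> a = b).
  { intros a b Pa Pb. apply Hext; auto. intro x; split; intro H'; exfalso; eapply Hno; eauto. }
  destruct (Hu (f z) (Hf z)) as [x [_ Hx]].
  assert (E1 : x = z) by (apply Hx; reflexivity).
  assert (E2 : x = f z) by (apply Hx; apply Heq; auto).
  apply Hz. rewrite <- E1, E2. apply Hf.
Qed.

Lemma full_of U (P : U -> Prop) e : LT P e -> (forall x, P x) -> Ext e /\ Sep e /\ Strat e.
Proof.
  intros [Hext [Hsep [Hstr Hiv]]] HP. split; [|split].
  - intros a b H. apply Hext; auto.
  - intros F a. destruct (Hsep F a (HP a)) as [b [_ Hb]]. eauto.
  - intros a. apply Hstr, HP.
Qed.

Lemma hist_acc U (e : U -> U -> Prop) (Hsep : Sep e) h :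
  history e h -> forall x, e x h -> Acc e x.
Proof.
  intros Hh x0 Hx0. apply NNPP; intro Hn.
  assert (Hstep : forall y, e y h -> ~ Acc e y -> exists y', e y' y /\ e y' h /\ ~ Acc e y').
  { intros y Hy Hny. apply NNPP; intro Hc. apply Hny. constructor. intros z Hz.
    destruct (proj1 (Hh y Hy z) Hz) as [c [Hzc [Hcy Hch]]].
    assert (Ac : Acc e c) by (apply NNPP; intro; apply Hc; eauto).
    constructor. intros m Hm. apply Hzc in Hm. exact (Acc_inv Ac Hm). }
  destruct (Hsep (fun z => forall y, e y h -> ~ Acc e y -> e z y) x0) as [D HD].
  assert (Hsub0 : forall S, subeq e S D -> forall y, e y h -> ~ Acc e y -> e S y).
  { intros S HS y Hy Hny. destruct (Hstep y Hy Hny) as [y' [Hy'y [Hy'h Hny']]].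
    apply (Hh y Hy S). exists y'. split; [|split; auto].
    intros w Hw. apply HS in Hw. apply HD in Hw. destruct Hw as [Hw _]. apply Hw; auto. }
  assert (Hsub : forall S, subeq e S D -> e S D).
  { intros S HS. apply HD. split; [apply Hsub0; auto|]. apply Hsub0; auto. }
  destruct (Hsep (fun z => ~ e z z) D) as [R HR].
  assert (HRD : e R D) by (apply Hsub; intros w Hw; apply HR in Hw; tauto).
  destruct (classic (e R R)) as [H1|H1].
  - pose proof (proj1 (HR R) H1). tauto.
  - apply H1. apply HR. auto.
Qed.

Lemma wf_all U (e : U -> U -> Prop) : Sep e -> Strat e -> forall a, Acc e a.
Proof.
  intros Hsep Hstr a. destruct (Hstr a) as [s [[h [Hh Hs]] Has]].
  constructor. intros z Hz. apply Has, Hs in Hz. destruct Hz as [c [Hzc Hch]].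
  pose proof (hist_acc U e Hsep h Hh c Hch) as Ac.
  constructor. intros m Hm. exact (Acc_inv Ac (Hzc m Hm)).
Qed.

Lemma hist_trans U (e : U -> U -> Prop) h : history e h ->
  forall x, Acc e x -> e x h -> forall y w, e y x -> e y h -> e w y -> e w h -> e w x.
Proof.
  intros Hh x Hacc. induction Hacc as [x _ IH].
  intros Hxh y w Hyx Hyh Hwy Hwh.
  destruct (proj1 (Hh x Hxh y) Hyx) as [c [Hyc [Hcx Hch]]].
  apply (Hh x Hxh w). exists c. split; [|auto].
  intros m Hm.
  assert (Hwc : e w c) by exact (Hyc w Hwy).
  destruct (proj1 (Hh w Hwh m) Hm) as [e' [Hme [He'w He'h]]].
  assert (He'c : e e' c) by exact (IH c Hcx Hch w e' Hwc Hwh He'w He'h).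
  apply (Hh c Hch m). exists e'. auto.
Qed.

Lemma hist_level U (e : U -> U -> Prop) (Hsep : Sep e) (Hwf : forall a, Acc e a) h :
  history e h -> forall x, e x h -> level e x.
Proof.
  intros Hh x Hxh.
  destruct (Hsep (fun z => e z x) h) as [hx Hhx].
  exists hx. split.
  - intros y Hy. apply Hhx in Hy. destruct Hy as [Hyx Hyh]. intro z. split.
    + intro Hz. destruct (proj1 (Hh y Hyh z) Hz) as [c [Hzc [Hcy Hch]]].
      exists c. split; auto. split; auto. apply Hhx. split; auto.
      apply (hist_trans U e h Hh x (Hwf x) Hxh y c); auto.
    + intros [c [Hzc [Hcy Hchx]]]. apply (Hh y Hyh z). exists c. apply Hhx in Hchx. tauto.
  - intro z. split.
    + intro Hz. destruct (proj1 (Hh x Hxh z) Hz) as [c [Hzc [Hcx Hch]]].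
      exists c. split; auto. apply Hhx; auto.
    + intros [c [Hzc Hc]]. apply Hhx in Hc. apply (Hh x Hxh z). exists c. tauto.
Qed.

Lemma lev_h U (e : U -> U -> Prop) s h c : is_pot e s h -> e c h -> e c s.
Proof. intros Hs Hc. apply Hs. exists c. split; auto. intros x Hx; auto. Qed.

Lemma lev_d U (e : U -> U -> Prop) s y z : level e s -> e y s -> subeq e z y -> e z s.
Proof.
  intros [h [Hh Hs]] Hy Hzy. apply Hs in Hy. destruct Hy as [c [Hyc Hch]].
  apply Hs. exists c. split; auto. intros x Hx. auto.
Qed.

Lemma lev_t U (e : U -> U -> Prop) s y z : level e s -> e y s -> e z y -> e z s.
Proof.
  intros [h [Hh Hs]] Hy Hzy. apply Hs in Hy. destruct Hy as [c [Hyc Hch]].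
  apply Hyc in Hzy. destruct (proj1 (Hh c Hch z) Hzy) as [c' [Hzc' [Hc'c Hc'h]]].
  apply Hs. exists c'. auto.
Qed.

Lemma tri_aux U (e : U -> U -> Prop) (Hext : Ext e) (Hsep : Sep e) (Hwf : forall a, Acc e a) :
  forall s, Acc e s -> forall t, Acc e t -> level e s -> level e t -> e s t \/ s = t \/ e t s.
Proof.
  intros s Hs. induction Hs as [s _ IHs].
  intros t Ht. induction Ht as [t _ IHt].
  intros Ls Lt.
  destruct (classic (e s t)) as [H1|H1]; auto.
  destruct (classic (e t s)) as [H2|H2]; auto.
  right; left. apply Hext. intro z.
  pose proof Ls as [h [Hh Hsh]]. pose proof Lt as [k [Hk Htk]].
  split; intro Hz.
  - apply Hsh in Hz. destruct Hz as [x [Hzx Hxh]].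
    assert (Lx : level e x) by exact (hist_level U e Hsep Hwf h Hh x Hxh).
    assert (xs : e x s) by exact (lev_h U e s h x Hsh Hxh).
    destruct (IHs x xs t (Hwf t) Lx Lt) as [H3|[H3|H3]].
    + exact (lev_d U e t x z Lt H3 Hzx).
    + subst x. contradiction.
    + exfalso. apply H2. exact (lev_t U e s x t Ls xs H3).
  - apply Htk in Hz. destruct Hz as [y [Hzy Hyk]].
    assert (Ly : level e y) by exact (hist_level U e Hsep Hwf k Hk y Hyk).
    assert (yt : e y t) by exact (lev_h U e t k y Htk Hyk).
    destruct (IHt y yt Ls Ly) as [H3|[H3|H3]].
    + exfalso. apply H1. exact (lev_t U e t y s Lt yt H3).
    + subst y. contradiction.
    + exact (lev_d U e s y z Ls H3 Hzy).
Qed.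

Lemma lstar U (e : U -> U -> Prop) (Hext : Ext e) (Hsep : Sep e) (Hwf : forall a, Acc e a) x t y :
  level e x -> level e t -> e y t -> ~ e y x -> e x t.
Proof.
  intros Lx Lt Hyt Hyx.
  destruct (tri_aux U e Hext Hsep Hwf x (Hwf x) t (Hwf t) Lx Lt) as [H|[H|H]]; auto.
  - subst. contradiction.
  - exfalso. apply Hyx. exact (lev_t U e x t y Lx H Hyt).
Qed.

Definition bis {U} (e1 e2 : U -> U -> Prop) (S : U -> U -> Prop) :=
  forall a b, S a b ->
    (forall a', e1 a' a -> exists b', e2 b' b /\ S a' b') /\
    (forall b', e2 b' b -> exists a', e1 a' a /\ S a' b').
Definition Bs {U} (e1 e2 : U -> U -> Prop) a b := exists S, bis e1 e2 S /\ S a b.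

Lemma Bs_bis U (e1 e2 : U -> U -> Prop) : bis e1 e2 (Bs e1 e2).
Proof.
  intros a b [S [HS Hab]]. destruct (HS a b Hab) as [H1 H2]. split.
  - intros a' Ha'. destruct (H1 a' Ha') as [b' [Hb' HS']]. exists b'. split; auto. exists S; auto.
  - intros b' Hb'. destruct (H2 b' Hb') as [a' [Ha' HS']]. exists a'. split; auto. exists S; auto.
Qed.

Lemma Bs_swap U (e1 e2 : U -> U -> Prop) a b : Bs e2 e1 b a -> Bs e1 e2 a b.
Proof.
  intros [S [HS Hab]]. exists (fun x y => S y x). split; auto.
  intros x y Hxy. destruct (HS y x Hxy) as [H1 H2]. split; auto.
Qed.

Lemma Bs_fun U (e1 e2 : U -> U -> Prop) (Hext : Ext e2) (Hwf : forall a, Acc e1 a) :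
  forall a b b', Bs e1 e2 a b -> Bs e1 e2 a b' -> b = b'.
Proof.
  intros a. induction (Hwf a) as [a _ IH]. intros b b' Hb Hb'.
  destruct (Bs_bis U e1 e2 a b Hb) as [H1 H2].
  destruct (Bs_bis U e1 e2 a b' Hb') as [H1' H2'].
  apply Hext. intro x. split; intro Hx.
  - destruct (H2 x Hx) as [a' [Ha' Hax]]. destruct (H1' a' Ha') as [x' [Hx' Hax']].
    rewrite (IH a' Ha' x x' Hax Hax'). auto.
  - destruct (H2' x Hx) as [a' [Ha' Hax]]. destruct (H1 a' Ha') as [x' [Hx' Hax']].
    rewrite (IH a' Ha' x x' Hax Hax'). auto.
Qed.

Lemma Bs_inj U (e1 e2 : U -> U -> Prop) (Hext : Ext e1) (Hwf : forall a, Acc e2 a) :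
  forall a a' b, Bs e1 e2 a b -> Bs e1 e2 a' b -> a = a'.
Proof.
  intros a a' b H H'. apply (Bs_fun U e2 e1 Hext Hwf b); apply Bs_swap; auto.
Qed.


Lemma Bs_mem U (e1 e2 : U -> U -> Prop) (Hext1 : Ext e1) (Hext2 : Ext e2)
  (Hwf1 : forall a, Acc e1 a) (Hwf2 : forall a, Acc e2 a) v y x z :
  Bs e1 e2 v y -> Bs e1 e2 x z -> (e1 v x <-> e2 y z).
Proof.
  intros Hvy Hxz. destruct (Bs_bis U e1 e2 x z Hxz) as [H1 H2]. split; intro H.
  - destruct (H1 v H) as [z' [Hz' Hvz']].
    rewrite (Bs_fun U e1 e2 Hext2 Hwf1 v y z' Hvy Hvz'). auto.
  - destruct (H2 y H) as [v' [Hv' Hv'y]].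
    rewrite (Bs_inj U e1 e2 Hext1 Hwf2 v v' y Hvy Hv'y). auto.
Qed.

Lemma Bs_ext U (e1 e2 : U -> U -> Prop) (Hsep : Sep e2) a :
  (forall a', e1 a' a -> exists b', Bs e1 e2 a' b') ->
  (exists t, forall a' b', e1 a' a -> Bs e1 e2 a' b' -> e2 b' t) ->
  exists b, Bs e1 e2 a b.
Proof.
  intros Hall [t Ht].
  destruct (Hsep (fun x => exists a', e1 a' a /\ Bs e1 e2 a' x) t) as [b Hb].
  exists b. exists (fun x y => Bs e1 e2 x y \/ (x = a /\ y = b)). split; [|right; auto].
  intros x y [Hxy | [-> ->]].
  - destruct (Bs_bis U e1 e2 x y Hxy) as [H1 H2]. split.
    + intros a' Ha'. destruct (H1 a' Ha') as [b0 [? ?]]. eauto.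
    + intros b' Hb'. destruct (H2 b' Hb') as [a0 [? ?]]. eauto.
  - split.
    + intros a' Ha'. destruct (Hall a' Ha') as [b' Hb']. exists b'. split; [|left; auto].
      apply Hb. split; eauto.
    + intros b' Hb'. apply Hb in Hb'. destruct Hb' as [[a' [? ?]] _]. exists a'. split; auto.
Qed.

Lemma Bs_subcl U (e1 e2 : U -> U -> Prop) (Hext1 : Ext e1) (Hext2 : Ext e2) (Hsep2 : Sep e2)
  (Hwf1 : forall a, Acc e1 a) (Hwf2 : forall a, Acc e2 a) x y z :
  Bs e1 e2 x y -> subeq e1 z x -> exists w, Bs e1 e2 z w.
Proof.
  intros Hxy Hzx. apply Bs_ext; auto.
  - intros a' Ha'. destruct (proj1 (Bs_bis U e1 e2 x y Hxy) a' (Hzx a' Ha')) as [b' [_ H]]. eauto.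
  - exists y. intros a' b' Ha' Hb'. apply (Bs_mem U e1 e2 Hext1 Hext2 Hwf1 Hwf2 a' b' x y); auto.
Qed.

Lemma Bs_subeq U (e1 e2 : U -> U -> Prop) (Hext1 : Ext e1) (Hext2 : Ext e2)
  (Hwf1 : forall a, Acc e1 a) (Hwf2 : forall a, Acc e2 a) x y z w :
  Bs e1 e2 x y -> Bs e1 e2 z w -> (subeq e1 z x <-> subeq e2 w y).
Proof.
  intros Hxy Hzw. split; intros H m Hm.
  - destruct (proj2 (Bs_bis U e1 e2 z w Hzw) m Hm) as [m1 [Hm1 Hm1m]].
    apply (Bs_mem U e1 e2 Hext1 Hext2 Hwf1 Hwf2 m1 m x y); auto.
  - destruct (proj1 (Bs_bis U e1 e2 z w Hzw) m Hm) as [m2 [Hm2 Hmm2]].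
    apply (Bs_mem U e1 e2 Hext1 Hext2 Hwf1 Hwf2 m m2 x y); auto.
Qed.

Lemma Bs_subcl2 U (e1 e2 : U -> U -> Prop) (Hext1 : Ext e1) (Hext2 : Ext e2) (Hsep1 : Sep e1)
  (Hwf1 : forall a, Acc e1 a) (Hwf2 : forall a, Acc e2 a) x y w :
  Bs e1 e2 x y -> subeq e2 w y -> exists z, Bs e1 e2 z w.
Proof.
  intros Hxy Hwy. destruct (Bs_subcl U e2 e1 Hext2 Hext1 Hsep1 Hwf2 Hwf1 y x w) as [z Hz]; auto.
  - apply Bs_swap. auto.
  - exists z. apply Bs_swap. auto.
Qed.

Definition Good {U} (e : U -> U -> Prop) := Ext e /\ Sep e /\ Strat e.

Ltac unpack G1 G2 :=
  let Hext1 := fresh "Hext1" in let Hsep1 := fresh "Hsep1" in let Hstr1 := fresh "Hstr1" in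
  let Hext2 := fresh "Hext2" in let Hsep2 := fresh "Hsep2" in let Hstr2 := fresh "Hstr2" in
  destruct G1 as [Hext1 [Hsep1 Hstr1]]; destruct G2 as [Hext2 [Hsep2 Hstr2]];
  let Hwf1 := fresh "Hwf1" in let Hwf2 := fresh "Hwf2" in
  pose proof (wf_all _ _ Hsep1 Hstr1) as Hwf1; pose proof (wf_all _ _ Hsep2 Hstr2) as Hwf2.

Lemma Bs_hist U (e1 e2 : U -> U -> Prop) (G1 : Good e1) (G2 : Good e2) h h2 :
  history e1 h -> Bs e1 e2 h h2 -> history e2 h2.
Proof.
  unpack G1 G2. intros Hh Hhh2 y2 Hy2.
  destruct (proj2 (Bs_bis U e1 e2 h h2 Hhh2) y2 Hy2) as [y [Hyh Hyy2]].
  intro z2. split.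
  - intro Hz2. destruct (proj2 (Bs_bis U e1 e2 y y2 Hyy2) z2 Hz2) as [z [Hzy Hzz2]].
    destruct (proj1 (Hh y Hyh z) Hzy) as [c [Hzc [Hcy Hch]]].
    destruct (proj1 (Bs_bis U e1 e2 y y2 Hyy2) c Hcy) as [c2 [Hc2y2 Hcc2]].
    exists c2. split; [|split; auto].
    + apply (proj1 (Bs_subeq U e1 e2 Hext1 Hext2 Hwf1 Hwf2 c c2 z z2 Hcc2 Hzz2)); auto.
    + apply (proj1 (Bs_mem U e1 e2 Hext1 Hext2 Hwf1 Hwf2 c c2 h h2 Hcc2 Hhh2)); auto.
  - intros [c2 [Hz2c2 [Hc2y2 Hc2h2]]].
    destruct (proj2 (Bs_bis U e1 e2 y y2 Hyy2) c2 Hc2y2) as [c [Hcy Hcc2]].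
    destruct (Bs_subcl2 U e1 e2 Hext1 Hext2 Hsep1 Hwf1 Hwf2 c c2 z2 Hcc2 Hz2c2) as [z Hzz2].
    apply (proj1 (Bs_mem U e1 e2 Hext1 Hext2 Hwf1 Hwf2 z z2 y y2 Hzz2 Hyy2)).
    apply (Hh y Hyh z). exists c. split; [|split; auto].
    + apply (proj2 (Bs_subeq U e1 e2 Hext1 Hext2 Hwf1 Hwf2 c c2 z z2 Hcc2 Hzz2)); auto.
    + apply (proj2 (Bs_mem U e1 e2 Hext1 Hext2 Hwf1 Hwf2 c c2 h h2 Hcc2 Hhh2)); auto.
Qed.

Lemma Bs_pot U (e1 e2 : U -> U -> Prop) (G1 : Good e1) (G2 : Good e2) s h s2 h2 :
  is_pot e1 s h -> Bs e1 e2 s s2 -> Bs e1 e2 h h2 -> is_pot e2 s2 h2.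
Proof.
  unpack G1 G2. intros Hs Hss2 Hhh2 z2. split.
  - intro Hz2. destruct (proj2 (Bs_bis U e1 e2 s s2 Hss2) z2 Hz2) as [z [Hzs Hzz2]].
    destruct (proj1 (Hs z) Hzs) as [c [Hzc Hch]].
    destruct (proj1 (Bs_bis U e1 e2 h h2 Hhh2) c Hch) as [c2 [Hc2h2 Hcc2]].
    exists c2. split; auto.
    apply (proj1 (Bs_subeq U e1 e2 Hext1 Hext2 Hwf1 Hwf2 c c2 z z2 Hcc2 Hzz2)); auto.
  - intros [c2 [Hz2c2 Hc2h2]].
    destruct (proj2 (Bs_bis U e1 e2 h h2 Hhh2) c2 Hc2h2) as [c [Hch Hcc2]].
    destruct (Bs_subcl2 U e1 e2 Hext1 Hext2 Hsep1 Hwf1 Hwf2 c c2 z2 Hcc2 Hz2c2) as [z Hzz2].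
    apply (proj1 (Bs_mem U e1 e2 Hext1 Hext2 Hwf1 Hwf2 z z2 s s2 Hzz2 Hss2)).
    apply (Hs z). exists c. split; auto.
    apply (proj2 (Bs_subeq U e1 e2 Hext1 Hext2 Hwf1 Hwf2 c c2 z z2 Hcc2 Hzz2)); auto.
Qed.

Lemma Bs_level U (e1 e2 : U -> U -> Prop) (G1 : Good e1) (G2 : Good e2) s s2 :
  level e1 s -> Bs e1 e2 s s2 -> level e2 s2.
Proof.
  intros [h [Hh Hs]] Hss2. pose proof G1 as G1'. pose proof G2 as G2'. unpack G1' G2'.
  destruct (Bs_subcl U e1 e2 Hext1 Hext2 Hsep2 Hwf1 Hwf2 s s2 h Hss2) as [h2 Hhh2].
  { intros c Hc. exact (lev_h U e1 s h c Hs Hc). }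
  exists h2. split.
  - exact (Bs_hist U e1 e2 G1 G2 h h2 Hh Hhh2).
  - exact (Bs_pot U e1 e2 G1 G2 s h s2 h2 Hs Hss2 Hhh2).
Qed.

Lemma rc U (e1 e2 : U -> U -> Prop) (G1 : Good e1) (G2 : Good e2) :
  forall w, Acc e1 w -> (exists w2, Bs e1 e2 w w2) ->
  forall c, level e1 c -> ~ e1 w c -> exists c2, Bs e1 e2 c c2.
Proof.
  pose proof G1 as G1'. pose proof G2 as G2'. unpack G1' G2'.
  intros w Hw. induction Hw as [w _ IH]. intros [w2 Hww2] c Lc Hwc.
  pose proof Lc as [h [Hh Hc]].
  destruct (Hstr2 w2) as [t2 [Lt2 Hw2t2]].
  assert (Claim : forall x, e1 x h -> exists x2, Bs e1 e2 x x2 /\ e2 x2 t2).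
  { intros x Hxh.
    assert (Hnsub : ~ subeq e1 w x).
    { intro Hs. apply Hwc. apply Hc. exists x. auto. }
    destruct (not_all_ex_not _ _ Hnsub) as [wx Hwx].
    apply imply_to_and in Hwx. destruct Hwx as [Hwxw Hwxx].
    assert (Lx : level e1 x) by exact (hist_level U e1 Hsep1 Hwf1 h Hh x Hxh).
    destruct (proj1 (Bs_bis U e1 e2 w w2 Hww2) wx Hwxw) as [wx2 [Hwx2w2 Hwxwx2]].
    destruct (IH wx Hwxw (ex_intro _ wx2 Hwxwx2) x Lx Hwxx) as [x2 Hxx2].
    exists x2. split; auto.
    assert (Lx2 : level e2 x2) by exact (Bs_level U e1 e2 G1 G2 x x2 Lx Hxx2).
    apply (lstar U e2 Hext2 Hsep2 Hwf2 x2 t2 wx2 Lx2 Lt2).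
    - apply Hw2t2. auto.
    - intro H. apply Hwxx.
      apply (proj2 (Bs_mem U e1 e2 Hext1 Hext2 Hwf1 Hwf2 wx wx2 x x2 Hwxwx2 Hxx2)); auto. }
  apply Bs_ext; auto.
  - intros z Hz. apply Hc in Hz. destruct Hz as [x [Hzx Hxh]].
    destruct (Claim x Hxh) as [x2 [Hxx2 _]].
    exact (Bs_subcl U e1 e2 Hext1 Hext2 Hsep2 Hwf1 Hwf2 x x2 z Hxx2 Hzx).
  - exists t2. intros z z2 Hz Hzz2. apply Hc in Hz. destruct Hz as [x [Hzx Hxh]].
    destruct (Claim x Hxh) as [x2 [Hxx2 Hx2t2]].
    apply (lev_d U e2 t2 x2 z2 Lt2 Hx2t2).
    apply (proj1 (Bs_subeq U e1 e2 Hext1 Hext2 Hwf1 Hwf2 x x2 z z2 Hxx2 Hzz2)); auto.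
Qed.

Lemma keyC U (e1 e2 : U -> U -> Prop) (G1 : Good e1) (G2 : Good e2) :
  ~ (forall a, exists b, Bs e1 e2 a b) ->
  exists s, forall d, (exists b, Bs e1 e2 d b) -> e1 d s.
Proof.
  intro Hn. destruct (not_all_ex_not _ _ Hn) as [a Ha].
  pose proof G1 as G1'. pose proof G2 as G2'. unpack G1' G2'.
  destruct (Hstr1 a) as [s1 [Ls1 Has1]].
  exists s1. intros d Hd. apply NNPP. intro Hds.
  destruct (rc U e1 e2 G1 G2 d (Hwf1 d) Hd s1 Ls1 Hds) as [s2 Hs2].
  apply Ha. exact (Bs_subcl U e1 e2 Hext1 Hext2 Hsep2 Hwf1 Hwf2 s1 s2 a Hs2 Has1).
Qed.

Lemma cantor_case U (e1 e2 : U -> U -> Prop) (G1 : Good e1) (G2 : Good e2) :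
  ~ (forall a, exists b, Bs e1 e2 a b) -> (forall b, exists a, Bs e1 e2 a b) -> False.
Proof.
  intros Hn H2. destruct (keyC U e1 e2 G1 G2 Hn) as [s Hs].
  pose proof G1 as G1'. pose proof G2 as G2'. unpack G1' G2'.
  destruct (Hsep1 (fun m => exists b, Bs e1 e2 m b /\ ~ e1 m b) s) as [R HR].
  destruct (H2 R) as [m0 Hm0].
  destruct (classic (e1 m0 R)) as [H|H].
  - pose proof H as H'. apply HR in H'. destruct H' as [[b [Hb Hnb]] _].
    rewrite <- (Bs_fun U e1 e2 Hext2 Hwf1 m0 R b Hm0 Hb) in Hnb. contradiction.
  - apply H. apply HR. split; [exists R; auto|]. apply Hs. eauto.
Qed.

Lemma russell_case U (e1 e2 : U -> U -> Prop) (G1 : Good e1) (G2 : Good e2) :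
  ~ (forall a, exists b, Bs e1 e2 a b) -> ~ (forall b, exists a, Bs e1 e2 a b) -> False.
Proof.
  intros Hn1 Hn2. destruct (keyC U e1 e2 G1 G2 Hn1) as [s1 Hs1].
  destruct (keyC U e2 e1 G2 G1) as [s2 Hs2].
  { intro H. apply Hn2. intro b. destruct (H b) as [a Ha]. exists a. apply Bs_swap; auto. }
  pose proof G1 as G1'. pose proof G2 as G2'. unpack G1' G2'.
  destruct (Hsep1 (fun x => (exists b, Bs e1 e2 x b) /\ ~ e1 x x) s1) as [R HR].
  destruct (Bs_ext U e1 e2 Hsep2 R) as [r2 Hr2].
  - intros a' Ha'. apply HR in Ha'. tauto.
  - exists s2. intros a' b' Ha' Hb'. apply Hs2. exists a'. apply Bs_swap. auto.
  - assert (HRs : e1 R s1) by (apply Hs1; eauto).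
    destruct (classic (e1 R R)) as [H|H].
    + pose proof H as H'. apply HR in H'. tauto.
    + apply H. apply HR. split; auto. split; eauto.
Qed.

Theorem theorem25 (U : Type) (P1 P2 : U -> Prop) (eps1 eps2 : U -> U -> Prop) :
  (LT P1 eps1 /\ Sigma P1 /\ LT P2 eps2 /\ Sigma P2) ->
  exists R : U -> U -> Prop,
    (forall v y, R v y -> P1 v /\ P2 y) /\
    (forall v, P1 v -> exists! y, R v y) /\
    (forall y, P2 y -> exists! v, R v y) /\
    (forall v y x z, R v y -> R x z -> (eps1 v x <-> eps2 y z)).
Proof.
  intros [L1 [S1 [L2 S2]]].
  pose proof (all_P U P1 eps1 L1 S1) as A1.
  pose proof (all_P U P2 eps2 L2 S2) as A2.
  assert (G1 : Good eps1) by exact (full_of U P1 eps1 L1 A1).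
  assert (G2 : Good eps2) by exact (full_of U P2 eps2 L2 A2).
  assert (H1 : forall a, exists b, Bs eps1 eps2 a b).
  { apply NNPP. intro Hn1. destruct (classic (forall b, exists a, Bs eps1 eps2 a b)) as [H2|H2].
    - exact (cantor_case U eps1 eps2 G1 G2 Hn1 H2).
    - exact (russell_case U eps1 eps2 G1 G2 Hn1 H2). }
  assert (H2 : forall b, exists a, Bs eps1 eps2 a b).
  { apply NNPP. intro Hn2. apply (cantor_case U eps2 eps1 G2 G1).
    - intro H. apply Hn2. intro b. destruct (H b) as [a Ha]. exists a. apply Bs_swap; auto.
    - intro a. destruct (H1 a) as [b Hb]. exists b. apply Bs_swap. auto. }
  pose proof G1 as G1'. pose proof G2 as G2'. unpack G1' G2'.
  exists (Bs eps1 eps2). split; [|split; [|split]].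
  - intros; auto.
  - intros v _. destruct (H1 v) as [y Hy]. exists y. split; auto.
    intros y' Hy'. exact (Bs_fun U eps1 eps2 Hext2 Hwf1 v y y' Hy Hy').
  - intros y _. destruct (H2 y) as [v Hv]. exists v. split; auto.
    intros v' Hv'. exact (Bs_inj U eps1 eps2 Hext1 Hwf2 v v' y Hv Hv').
  - intros v y x z Hvy Hxz. exact (Bs_mem U eps1 eps2 Hext1 Hext2 Hwf1 Hwf2 v y x z Hvy Hxz).
Qed.
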